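(* Let $A\subseteq\mathbb{R}^d$ be open, let $g:\mathbb{R}^d\to A$ be Lipschitz with constant $L_g$, and let $f:A\to\mathbb{R}^m$ be intrinsic Lipschitz (on $A$) with constant $L_f$. Then $f\circ g$ is intrinsic Lipschitz with constant $L_fL_g$.
   Context: Length of a continuous curve: $\ell(\gamma)=\sup\sum_{k}\|\gamma(t_k)-\gamma(t_{k-1})\|$ over partitions of $[0,1]$. Intrinsic metric on a set $S\subseteq\mathbb{R}^d$: $\rho(x,y)=\inf\{\ell(\gamma):\gamma:[0,1]\to S\text{ continuous from }x\text{ to }y\}$ ($\infty$ if no such curve). A map $h:S\to\mathbb{R}^m$ is intrinsic Lipschitz with constant $L$ if $\|h(x)-h(y)\|\le L\rho(x,y)$ for all $x,y\in S$. *)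

(* Defs.v *)
From HB Require Import structures.
From mathcomp Require Import all_boot all_order all_algebra.
From mathcomp Require Import all_classical all_reals.
From mathcomp Require Import ereal.
Set Implicit Arguments. Unset Strict Implicit. Unset Printing Implicit Defensive.
Import Order.TTheory GRing.Theory Num.Theory.
Local Open Scope ring_scope.
Local Open Scope classical_set_scope.

Definition enorm {R : realType} {n : nat} (v : 'rV[R]_n) : R :=
  Num.sqrt (\sum_(i < n) v 0 i ^+ 2).

Definition eopen {R : realType} {n : nat} (A : set 'rV[R]_n) : Prop :=
  forall x, A x -> exists2 r : R, 0 < r & forall y, enorm (y - x) < r -> A y.

(* continuity of a curve gamma on [0,1] (values outside [0,1] irrelevant) *)
Definition ccurve {R : realType} {n : nat} (gamma : R -> 'rV[R]_n) : Prop :=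
  forall t, 0 <= t <= 1 -> forall eps : R, 0 < eps ->
    exists2 delta : R, 0 < delta & forall s, 0 <= s <= 1 ->
      `|s - t| < delta -> enorm (gamma s - gamma t) < eps.

(* partitions 0 = t_0 <= t_1 <= ... <= t_k = 1, written as 0 :: q *)
Definition partition {R : realType} (q : seq R) : Prop :=
  sorted <=%R (0 :: q) /\ last 0 q = 1.

Definition partition_sum {R : realType} {n : nat} (gamma : R -> 'rV[R]_n)
  (q : seq R) : R :=
  \sum_(i < size q) enorm (gamma (nth 0 q i) - gamma (nth 0 (0 :: q) i)).

Definition curve_length {R : realType} {n : nat} (gamma : R -> 'rV[R]_n)
  : \bar R :=
  ereal_sup [set (partition_sum gamma q)%:E | q in [set q | partition q]].

(* intrinsic metric on S (+oo if no curve) *)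
Definition intrinsic_dist {R : realType} {n : nat} (S : set 'rV[R]_n)
  (x y : 'rV[R]_n) : \bar R :=
  ereal_inf [set curve_length gamma | gamma in
    [set gamma | ccurve gamma /\ gamma 0 = x /\ gamma 1 = y /\
                 (forall t, 0 <= t <= 1 -> S (gamma t))]].

(* intrinsic Lipschitz with constant L on S; the inequality is required
   whenever rho(x,y) is finite (it is vacuous when rho = +oo). *)
Definition intrinsic_lipschitz {R : realType} {n m : nat} (S : set 'rV[R]_n)
  (h : 'rV[R]_n -> 'rV[R]_m) (L : R) : Prop :=
  forall x y, S x -> S y -> (intrinsic_dist S x y < +oo)%E ->
    ((enorm (h x - h y))%:E <= L%:E * intrinsic_dist S x y)%E.

Definition lipschitz {R : realType} {n m : nat} (g : 'rV[R]_n -> 'rV[R]_m)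
  (L : R) : Prop :=
  forall x y, enorm (g x - g y) <= L * enorm (x - y).

(* Main.v *)
Require Import Defs.
From mathcomp Require Import all_boot all_order all_algebra.
From mathcomp Require Import all_classical all_reals.
From mathcomp Require Import ereal.
Import Order.TTheory GRing.Theory Num.Theory.
Local Open Scope ring_scope.
Local Open Scope classical_set_scope.

Section H.
Variables (R : realType) (d : nat) (g : 'rV[R]_d -> 'rV[R]_d) (Lg : R).
Hypotheses (Lg0 : 0 <= Lg) (Hg : lipschitz g Lg).

Lemma len_comp (gamma : R -> 'rV[R]_d) :
  (curve_length (g \o gamma) <= Lg%:E * curve_length gamma)%E.
Proof.
apply: ge_ereal_sup => _ [q Hq <-].
apply: (@le_trans _ _ (Lg * partition_sum gamma q)%:E).
  rewrite lee_fin /partition_sum mulr_sumr; apply: ler_sum => i _; exact: Hg.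
rewrite EFinM; apply: lee_wpmul2l; first by rewrite lee_fin.
by apply: ereal_sup_ubound; exists q.
Qed.

Lemma ccurve_comp (gamma : R -> 'rV[R]_d) : ccurve gamma -> ccurve (g \o gamma).
Proof.
move=> Hc t Ht eps Heps.
have He' : 0 < eps / (Lg + 1) by rewrite divr_gt0 // ltr_wpDl.
have [de Hde Hs] := Hc t Ht _ He'.
exists de => // s Hs01 Hst.
apply: (le_lt_trans (Hg _ _)).
have := Hs s Hs01 Hst => h.
apply: (@le_lt_trans _ _ (Lg * (eps / (Lg + 1)))).
  by apply: ler_wpM2l => //; apply: ltW.
rewrite mulrA ltr_pdivrMr ?ltr_wpDl //.
by rewrite mulrDr mulr1 mulrC ltrDl.
Qed.
End H.

Theorem lemma3p9 (R : realType) (d m : nat) (A : set 'rV[R]_d)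
  (g : 'rV[R]_d -> 'rV[R]_d) (f : 'rV[R]_d -> 'rV[R]_m) (Lg Lf : R) :
  eopen A ->
  (forall x, A (g x)) ->
  0 <= Lg -> lipschitz g Lg ->
  0 <= Lf -> intrinsic_lipschitz A f Lf ->
  intrinsic_lipschitz setT (f \o g) (Lf * Lg).
Proof.
move=> _ HA Lg0 Hg Lf0 Hf x y _ _ Hfin.
set M := enorm _.
have claim : forall gamma, ccurve gamma -> gamma 0 = x -> gamma 1 = y ->
    (curve_length gamma < +oo)%E -> (M%:E <= (Lf * Lg)%:E * curve_length gamma)%E.
  move=> gamma Hc H0 H1 Hl.
  have Hrho : (intrinsic_dist A (g x) (g y) <= Lg%:E * curve_length gamma)%E.
    apply: le_trans; last exact: (@len_comp R d g Lg Lg0 Hg gamma).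
    apply: ereal_inf_lbound; exists (g \o gamma) => //.
    by split; [exact: (@ccurve_comp R d g Lg)|rewrite /= H0 H1].
  have Hrf : (intrinsic_dist A (g x) (g y) < +oo)%E.
    apply: le_lt_trans Hrho _.
    move: Hl; case: (curve_length gamma) => [r _| //|_].
      by rewrite -EFinM ltey.
    have [->|Lgp] := eqVneq Lg 0; first by rewrite mul0e.
    by rewrite gt0_muleNy // lte_fin lt_neqAle eq_sym Lgp.
  apply: le_trans (Hf _ _ (HA x) (HA y) Hrf) _.
  by rewrite EFinM -muleA; apply: lee_wpmul2l => //; rewrite lee_fin.
have [c0|cpos] := eqVneq (Lf * Lg) 0.
  have [_ [gamma [Hc [H0 [H1 _]]] <-] Hl] := ereal_inf_lt Hfin.
  have := claim gamma Hc H0 H1 Hl.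
  by rewrite c0 !mul0e.
have cgt0 : 0 < Lf * Lg by rewrite lt_neqAle eq_sym cpos mulr_ge0.
have -> : (M%:E = (Lf * Lg)%:E * (M / (Lf * Lg))%:E)%E.
  by rewrite -EFinM mulrC divfK.
apply: lee_wpmul2l; first by rewrite lee_fin ltW.
apply: le_ereal_inf_tmp => _ [gamma [Hc [H0 [H1 _]]] <-].
have [Hl|] := ltP (curve_length gamma) +oo%E; last first.
  by rewrite leye_eq => /eqP ->; exact: leey.
have := claim gamma Hc H0 H1 Hl.
case: (curve_length gamma) Hl => [r| |] //= _.
  by rewrite -EFinM !lee_fin ler_pdivrMr // mulrC.
by rewrite gt0_muleNy ?lte_fin // leeNy_eq.
Qed.
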